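(* Let $G_0^*$ and $G_1^*$ be $k$-uniform hypergraphs on $n$ and $m$ vertices respectively, and let $\mathcal{A}$ be their corona matrix. Then for every real $\lambda$ that is not an eigenvalue of $A(G_1^* )$, $$P_{\mathcal{A}}(\lambda)=\big(P_{A(G_1^* )}(\lambda)\big)^n\,P_{A(G_0^* )}\Big(\lambda+\binom{m-1}{k-2}^2\chi_{A(G_1^* )}(\lambda)\Big).$$
   Context: All hypergraphs are finite and simple: a hypergraph $G^*=(V,E)$ consists of a finite vertex set $V$ and a set $E$ of subsets of $V$ (hyperedges), each of size at least $2$. It is $k$-uniform if every hyperedge has exactly $k$ elements. For a hypergraph with vertices $v_1,\dots,v_n$, the adjacency matrix $A(G^* )$ is the $n\times n$ matrix whose $(i,j)$ entry, for $i\ne j$, is the number of hyperedges containing both $v_i$ and $v_j$, and whose diagonal entries are $0$. $J_{a,b}$ is the all-ones $a\times b$ matrix, $I_n$ the identity, $\otimes$ the Kronecker product. For a square matrix $M$, $P_M(\lambda)=\det(M-\lambda I)$. Binomial coefficients $\binom{x}{y}$ with integers $x\ge 0$ and $y$ are $0$ when $y<0$ or $y>x$. Coronal: for an $n\times n$ matrix $M$ and real $\lambda$ with $M-\lambda I_n$ invertible, $\chi_M(\lambda)=J_{1,n}(M-\lambda I_n)^{-1}J_{n,1}$, the sum of all entries of $(M-\lambda I_n)^{-1}$. Corona matrix: for $k$-uniform hypergraphs $G_0^*$ on $n$ vertices and $G_1^*$ on $m$ vertices, with $b=\binom{m-1}{k-2}$, the corona matrix is $$\mathcal{A}=\begin{bmatrix}A(G_0^*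 ) & b\,(J_{1,m}\otimes I_n)\\ b\,(J_{m,1}\otimes I_n) & A(G_1^* )\otimes I_n\end{bmatrix}.$$ *)

(* Defs.v *)
From mathcomp Require Import all_boot all_order all_algebra.
Set Implicit Arguments.
Unset Strict Implicit.
Unset Printing Implicit Defensive.
Import Order.TTheory GRing.Theory Num.Theory.
Local Open Scope ring_scope.

Record hypergraph (n : nat) := Hypergraph {
  hedges : {set {set 'I_n}};
  hedge_size : forall e, e \in hedges -> (2 <= #|e|)%N }.

Definition uniform (k n : nat) (G : hypergraph n) : Prop :=
  forall e, e \in hedges G -> #|e| = k.

Definition adj (R : nzRingType) (n : nat) (G : hypergraph n) : 'M[R]_n :=
  \matrix_(i, j) (if i == j then 0
                  else #|[set e in hedges G | (i \in e) && (j \in e)]|%:R).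

(* Kronecker product; row index of A (x) B : i1 * m2 + i2 *)
Lemma kron_div_lt (a b : nat) (i : 'I_(a * b)) : (i %/ b < a)%N.
Proof.
case: b i => [|b] [i hi] /=; first by rewrite muln0 in hi.
by rewrite ltn_divLR.
Qed.

Lemma kron_mod_lt (a b : nat) (i : 'I_(a * b)) : (i %% b < b)%N.
Proof.
case: b i => [|b] [i hi] /=; first by rewrite muln0 in hi.
by rewrite ltn_mod.
Qed.

Definition kdiv (a b : nat) (i : 'I_(a * b)) : 'I_a := Ordinal (kron_div_lt i).
Definition kmod (a b : nat) (i : 'I_(a * b)) : 'I_b := Ordinal (kron_mod_lt i).

Definition kron (R : nzRingType) (m1 n1 m2 n2 : nat)
  (A : 'M[R]_(m1, n1)) (B : 'M[R]_(m2, n2)) : 'M[R]_(m1 * m2, n1 * n2) :=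
  \matrix_(i, j) (A (kdiv i) (kdiv j) * B (kmod i) (kmod j)).

Definition Jmx (R : nzRingType) (a b : nat) : 'M[R]_(a, b) := const_mx 1.

Definition charP (R : comNzRingType) (n : nat) (M : 'M[R]_n) (l : R) : R :=
  \det (M - l%:M).

Definition coronal (R : fieldType) (n : nat) (M : 'M[R]_n) (l : R) : R :=
  (Jmx R 1 n *m invmx (M - l%:M) *m Jmx R n 1) ord0 ord0.

Definition corona_mx (R : nzRingType) (k n m : nat)
  (G0 : hypergraph n) (G1 : hypergraph m) : 'M[R]_(n + m * n) :=
  let b : R := ('C(m.-1, k - 2))%:R in
  block_mx (adj R G0) (castmx (mul1n n, erefl) (b *: kron (Jmx R 1 m) (1%:M : 'M[R]_n)))
           (castmx (erefl, mul1n n) (b *: kron (Jmx R m 1) (1%:M : 'M[R]_n)))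
           (kron (adj R G1) (1%:M : 'M[R]_n)).

(* Main.v *)
Require Import Defs.
From mathcomp Require Import all_boot all_order all_algebra.
From mathcomp Require Import zify ring lra fingroup perm.
Import Order.TTheory GRing.Theory Num.Theory.
Set Implicit Arguments.
Unset Strict Implicit.
Unset Printing Implicit Defensive.
Local Open Scope ring_scope.
Section K.
Variable R : comNzRingType.

Lemma kdivE a b (i : 'I_(a*b)) : val (kdiv i) = (i %/ b)%N. Proof. by []. Qed.
Lemma kmodE a b (i : 'I_(a*b)) : val (kmod i) = (i %% b)%N. Proof. by []. Qed.

Lemma kidx_lt a b (x : 'I_a) (y : 'I_b) : (x * b + y < a * b)%N.
Proof. case: x y => x hx [y hy] /=; nia. Qed.

Definition kidx a b (x : 'I_a) (y : 'I_b) : 'I_(a*b) := Ordinal (kidx_lt x y).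

Lemma kdiv_kidx a b x y : kdiv (@kidx a b x y) = x.
Proof.
apply: val_inj; rewrite kdivE /=.
case: x y => x hx [y hy] /=; rewrite divnMDl ?divn_small //; [lia|lia].
Qed.

Lemma kmod_kidx a b x y : kmod (@kidx a b x y) = y.
Proof.
apply: val_inj; rewrite kmodE /=.
case: x y => x hx [y hy] /=; rewrite modnMDl modn_small //.
Qed.

Lemma kidxK a b (i : 'I_(a*b)) : kidx (kdiv i) (kmod i) = i.
Proof. apply: val_inj => /=; by rewrite -divn_eq. Qed.

Lemma keqE a b (i j : 'I_(a*b)) : (i == j) = (kdiv i == kdiv j) && (kmod i == kmod j).
Proof.
apply/eqP/andP => [->|[/eqP e1 /eqP e2]]; first by [].
by rewrite -(kidxK i) -(kidxK j) e1 e2.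
Qed.

Lemma sum_kron a b (F : 'I_a -> 'I_b -> R) :
  \sum_(k < a * b) F (kdiv k) (kmod k) = \sum_(x < a) \sum_(y < b) F x y.
Proof.
rewrite pair_big /=.
rewrite (reindex (fun k : 'I_(a*b) => (kdiv k, kmod k))) //.
exists (fun p : 'I_a * 'I_b => kidx p.1 p.2) => [k _|[x y] _] /=.
  by rewrite kidxK.
by rewrite kdiv_kidx kmod_kidx.
Qed.

Lemma kron_mul p1 q1 r1 p2 q2 r2 (A : 'M[R]_(p1,q1)) (B : 'M[R]_(p2,q2))
  (C : 'M[R]_(q1,r1)) (D : 'M[R]_(q2,r2)) :
  kron A B *m kron C D = kron (A *m C) (B *m D).
Proof.
apply/matrixP => i j; rewrite !mxE.
pose F := fun (x : 'I_q1) (y : 'I_q2) => (A (kdiv i) x * C x (kdiv j)) * (B (kmod i) y * D y (kmod j)).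
transitivity (\sum_(k < q1 * q2) F (kdiv k) (kmod k)).
  by apply: eq_bigr => k _; rewrite !mxE /F; ring.
rewrite sum_kron big_distrl /=; apply: eq_bigr => x _.
by rewrite big_distrr /=; apply: eq_bigr => y _.
Qed.

End K.
Section D.
Variable R : comNzRingType.

Lemma det_conj_inj p (A : 'M[R]_p) (f : 'I_p -> 'I_p) : injective f ->
  \det (\matrix_(i, j) A (f i) (f j)) = \det A.
Proof.
move=> fi; pose s := perm fi.
have -> : \matrix_(i, j) A (f i) (f j) = row_perm s (col_perm s A).
  by apply/matrixP => i j; rewrite !mxE !permE.
rewrite row_permE col_permE mulmxA !det_mulmx -mulrA (mulrC (\det A)) mulrA.
by rewrite -det_mulmx -perm_mxM mulgV perm_mx1 det1 mul1r.
Qed.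

Lemma det_conj_bij p q (e : p = q) (A : 'M[R]_q) (f : 'I_p -> 'I_q) : injective f ->
  \det (\matrix_(i, j) A (f i) (f j)) = \det A.
Proof. by subst q; apply: det_conj_inj. Qed.

Lemma kdiv_lsh m n (a : 'I_m) : val (kdiv (lshift (n * m) a : 'I_(n.+1 * m))) = 0%N.
Proof. by rewrite kdivE /= divn_small. Qed.
Lemma kmod_lsh m n (a : 'I_m) : kmod (lshift (n * m) a : 'I_(n.+1 * m)) = a.
Proof. by apply: val_inj; rewrite kmodE /= modn_small. Qed.
Lemma kdiv_rsh m n (b : 'I_(n * m)) : val (kdiv (rshift m b : 'I_(n.+1 * m))) = (kdiv b).+1.
Proof.
rewrite !kdivE /=; case: m b => [|m] b; first by case: b => b; rewrite muln0.
by rewrite -{1}(mul1n m.+1) divnMDl.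
Qed.
Lemma kmod_rsh m n (b : 'I_(n * m)) : kmod (rshift m b : 'I_(n.+1 * m)) = kmod b.
Proof.
apply: val_inj; rewrite !kmodE /=.
by rewrite -{1}(mul1n m) modnMDl.
Qed.

Lemma det_kron1l m (M : 'M[R]_m) n : \det (kron (1%:M : 'M[R]_n) M) = \det M ^+ n.
Proof.
elim: n => [|n IH]; first by rewrite det_mx00 expr0.
have -> : kron (1%:M : 'M[R]_n.+1) M =
  (block_mx M 0 0 (kron (1%:M : 'M[R]_n) M) : 'M_(m + n * m)).
  apply/matrixP => i j.
  rewrite mxE -[i](@splitK m (n * m)) -[j](@splitK m (n * m)).
  case: (split i) => a; case: (split j) => b;
    rewrite ?block_mxEul ?block_mxEur ?block_mxEdl ?block_mxEdr ?mxE.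
  - rewrite /= !kmod_lsh -val_eqE !kdiv_lsh /= mul1r //.
  - rewrite /= -val_eqE kdiv_lsh kdiv_rsh /= mul0r //.
  - rewrite /= -val_eqE kdiv_lsh kdiv_rsh /= mul0r //.
  - rewrite /= !kmod_rsh -val_eqE !kdiv_rsh /= eqSS //.
by rewrite det_ublock IH exprS.
Qed.

Lemma det_kron1r m (M : 'M[R]_m) n : \det (kron M (1%:M : 'M[R]_n)) = \det M ^+ n.
Proof.
pose f := fun i : 'I_(m * n) => kidx (kmod i) (kdiv i).
have fi : injective f.
  move=> i j e; rewrite -(kidxK i) -(kidxK j).
  have := congr1 (@kdiv _ _) e; have := congr1 (@kmod _ _) e.
  by rewrite !kdiv_kidx !kmod_kidx => -> ->.
rewrite -(det_kron1l M n) -(det_conj_bij (mulnC m n) _ fi).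
apply: congr1; apply/matrixP => i j; rewrite !mxE /f !kdiv_kidx !kmod_kidx mulrC //.
Qed.
End D.
Section M.
Variable R : comNzRingType.

Lemma castmx_mull p p' q r (e : p = p') (A : 'M[R]_(p, q)) (B : 'M[R]_(q, r)) :
  castmx (e, erefl) A *m B = castmx (e, erefl) (A *m B).
Proof. by subst p'; rewrite !castmx_id. Qed.

Lemma castmx_mulr p q r r' (e : r = r') (A : 'M[R]_(p, q)) (B : 'M[R]_(q, r)) :
  A *m castmx (erefl, e) B = castmx (erefl, e) (A *m B).
Proof. by subst r'; rewrite !castmx_id. Qed.

Lemma kron11 p q : kron (1%:M : 'M[R]_p) (1%:M : 'M[R]_q) = 1%:M.
Proof.
apply/matrixP => i j; rewrite !mxE (keqE i j).
by case: (kdiv i == kdiv j); case: (kmod i == kmod j); rewrite /= ?mulr1 ?mul0r ?mulr0.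
Qed.

Lemma kronBs p q (A : 'M[R]_p) (l : R) :
  kron A (1%:M : 'M[R]_q) - l%:M = kron (A - l%:M) 1%:M.
Proof.
apply/matrixP => i j; rewrite !mxE (keqE i j).
by case: (kdiv i == kdiv j); case: (kmod i == kmod j); rewrite /= ?mulr1 ?mul0r ?mulr0 ?subr0.
Qed.

Lemma kronZl p q r s (a : R) (A : 'M[R]_(p, q)) (B : 'M[R]_(r, s)) :
  a *: kron A B = kron (a *: A) B.
Proof. by apply/matrixP => i j; rewrite !mxE mulrA. Qed.

Lemma schur_det p q (P : 'M[R]_p) (Q : 'M[R]_(p, q)) (S : 'M[R]_(q, p)) (T Ti : 'M[R]_q) :
  Ti *m T = 1%:M ->
  \det (block_mx P Q S T) = \det (P - Q *m Ti *m S) * \det T.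
Proof.
move=> hT.
have -> : block_mx P Q S T = block_mx 1%:M (Q *m Ti) 0 1%:M *m block_mx (P - Q *m Ti *m S) 0 S T.
  rewrite mulmx_block !mul1mx !mul0mx !add0r subrK -mulmxA hT mulmx1 //.
by rewrite det_mulmx det_ublock det_lblock !det1 !mul1r.
Qed.
End M.

Theorem theorem4p4 (R : realFieldType) (k n m : nat)
  (G0 : hypergraph n) (G1 : hypergraph m)
  (hk : (2 <= k)%N) (u0 : uniform k G0) (u1 : uniform k G1) (l : R) :
  ~~ eigenvalue (adj R G1) l ->
  charP (corona_mx R k G0 G1) l =
  charP (adj R G1) l ^+ n *
  charP (adj R G0) (l + ('C(m.-1, k - 2))%:R ^+ 2 * coronal (adj R G1) l).
Proof.
move=> nev.
set N := adj R G1 - l%:M.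
have uN : N \in unitmx by rewrite -row_free_unit -kermx_eq0; exact: negbNE nev.
set b : R := ('C(m.-1, k - 2))%:R.
rewrite /charP /corona_mx -/b.
rewrite (scalar_mx_block n (m * n)) opp_block_mx add_block_mx !oppr0 !addr0 kronBs -/N.
rewrite (@schur_det _ _ _ _ _ _ _ (kron (invmx N) 1%:M)); last first.
  by rewrite kron_mul mulVmx // mul1mx kron11.
rewrite det_kron1r mulrC; congr (_ * _).
apply: congr1.
have -> : castmx (mul1n n, erefl) (b *: kron (Jmx R 1 m) (1%:M : 'M_n)) *m
  kron (invmx N) 1%:M *m castmx (erefl, mul1n n) (b *: kron (Jmx R m 1) 1%:M) =
  (b ^+ 2 * coronal (adj R G1) l)%:M.
  rewrite castmx_mulr !castmx_mull -!scalemxAl -!scalemxAr !kron_mul !mulmx1.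
  apply/matrixP => i j; rewrite !castmxE !mxE /coronal -/N !ord1.
  have km : forall x : 'I_(1 * n), val (kmod x) = val x.
    by move=> [x hx]; rewrite kmodE modn_small //; move: hx; rewrite mul1n.
  rewrite -val_eqE !km /= val_eqE !mxE expr2.
  by case: (i == j); rewrite /= ?mulr1 ?mulr0 ?mulrA.
by rewrite raddfD /= opprD addrA.
Qed.
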